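(* Let $B_J\in\mathbb R^{n\times n}$ and let $P_1,\dots,P_d$ ($1\le d\le n$) be nonzero $n\times n$ matrices with entries in $\{0,1\}$ such that $\sum_{p=1}^dP_p=I$ (a decomposition of the identity; hence each $P_p$ is a diagonal $0/1$ matrix and they have disjoint supports), and assume $P_pB_J\ne O$ for all $p$. Let $\mathcal P=\prod_{p=d}^{1}(P_pB_J+I-P_p)=(P_dB_J+I-P_d)\cdots(P_1B_J+I-P_1)$. Then $\mathcal P$ and the iteration matrix $T(\mathcal B)$ of the splitting $\mathcal B=(P_1B_J,\dots,P_dB_J)$ of $B_J$ have the same nonzero eigenvalues.
   Context: For $B\in\mathbb R^{n\times n}$, a splitting of $B$ of order $d\ge1$ is an ordered $d$-tuple $\mathcal B=(B_1,\dots,B_d)$ of real $n\times n$ matrices with $B_p\neq O$ for all $p$, $\sum_{p=1}^d B_p=B$, and $B_p\circ B_q=O$ (Hadamard product) for $p\ne q$. The iteration matrix of $\mathcal B$ is the $dn\times dn$ matrix $T(\mathcal B)=(I_{dn}-\mathcal L)^{-1}\mathcal U$, where $\mathcal L,\mathcal U$ are $d\times d$ block matrices with $n\times n$ blocks, $\mathcal L_{ij}=B_j$ if $i>j$ and $O$ otherwise, $\mathcal U_{ij}=B_j$ if $i\le j$ and $O$ otherwise. *)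

(* Defs.v *)
(* real matrices over an abstract real closed field R,
   eigenvalues taken in its algebraic closure R[i] (mathcomp-real-closed). *)
From HB Require Import structures.
From mathcomp Require Import all_boot all_order all_algebra.
Set Implicit Arguments. Unset Strict Implicit. Unset Printing Implicit Defensive.
Import Order.TTheory GRing.Theory Num.Theory.
Local Open Scope ring_scope.

Lemma blk_proof (d n : nat) (a : 'I_(d * n)) : (a %/ n < d)%N.
Proof.
have := ltn_ord a; move: (nat_of_ord a) => m; clear a; case: n => [|n]; first by rewrite muln0.
by rewrite ltn_divLR // mulnC.
Qed.

Definition blk (d n : nat) (a : 'I_(d * n)) : 'I_d := Ordinal (blk_proof a).
Lemma pos_proof (d n : nat) (a : 'I_(d * n)) : (a %% n < n)%N.
Proof.
have := ltn_ord a; move: (nat_of_ord a) => m; clear a; case: n => [|n].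
  by rewrite muln0.
by rewrite ltn_mod.
Qed.
Definition pos (d n : nat) (a : 'I_(d * n)) : 'I_n := Ordinal (pos_proof a).

Section Iter.
Variables (R : fieldType) (d n : nat).

Definition Lmx (Bs : 'I_d -> 'M[R]_n) : 'M[R]_(d * n) :=
  \matrix_(a, b) (if (blk b < blk a)%N then Bs (blk b) (pos a) (pos b) else 0).
Definition Umx (Bs : 'I_d -> 'M[R]_n) : 'M[R]_(d * n) :=
  \matrix_(a, b) (if (blk a <= blk b)%N then Bs (blk b) (pos a) (pos b) else 0).

Definition iter_mx (Bs : 'I_d -> 'M[R]_n) : 'M[R]_(d * n) :=
  invmx (1%:M - Lmx Bs) *m Umx Bs.

(* ordered product F_{d-1} * ... * F_1 * F_0  (0-indexed) *)
Definition rprod_mx (F : 'I_d -> 'M[R]_n) : 'M[R]_n :=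
  foldr (fun i acc => F i *m acc) 1%:M (rev (enum 'I_d)).
End Iter.

Definition is_splitting (R : fieldType) (d n : nat) (B : 'M[R]_n)
  (Bs : 'I_d -> 'M[R]_n) : Prop :=
  [/\ (0 < d)%N, forall p, Bs p != 0, \sum_p Bs p = B &
      forall p q, p != q -> forall i j, Bs p i j * Bs q i j = 0].

(* Main.v *)
Require Import Defs.
From HB Require Import structures.
From mathcomp Require Import all_boot all_order all_algebra.
From mathcomp Require Import complex.
Import Order.TTheory GRing.Theory Num.Theory.
Local Open Scope ring_scope.

Set Implicit Arguments. Unset Strict Implicit. Unset Printing Implicit Defensive.

Section Blocks.
Variables (F : fieldType) (d n : nat).

Lemma idx_proof (j : 'I_d) (k : 'I_n) : (j * n + k < d * n)%N.
Proof.
have h1 : (j * n + k < j.+1 * n)%N by rewrite mulSn addnC ltn_add2r.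
apply: (leq_trans h1); exact: leq_mul (ltn_ord j) (leqnn n).
Qed.
Definition idx (j : 'I_d) (k : 'I_n) : 'I_(d * n) := Ordinal (idx_proof j k).

Lemma blk_idx j k : blk (idx j k) = j.
Proof.
apply: val_inj => /=.
have n0 : (0 < n)%N by case: k => k /=; case: n => // ?.
by rewrite divnMDl // divn_small // addn0.
Qed.

Lemma pos_idx j k : pos (idx j k) = k.
Proof. apply: val_inj => /=; by rewrite modnMDl modn_small. Qed.

Lemma idx_blk_pos (a : 'I_(d * n)) : idx (blk a) (pos a) = a.
Proof. apply: val_inj => /=; by rewrite -divn_eq. Qed.

Lemma sum_blocks (G : 'I_(d * n) -> F) :
  \sum_b G b = \sum_j \sum_k G (idx j k).
Proof.
rewrite pair_big /= (reindex (fun p : 'I_d * 'I_n => idx p.1 p.2)) //=.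
exists (fun b => (blk b, pos b)) => [[j k] _ | b _] /=.
  by rewrite blk_idx pos_idx.
by rewrite idx_blk_pos.
Qed.

Definition Xof (x : 'cV[F]_(d * n)) (j : 'I_d) : 'cV[F]_n := \col_k x (idx j k) 0.

Lemma cV_blockP x y : (forall j, Xof x j = Xof y j) -> x = y.
Proof.
move=> h; apply/matrixP => a z; rewrite (ord1 z) -(idx_blk_pos a).
by have /matrixP /(_ (pos a) 0) := h (blk a); rewrite !mxE.
Qed.

Lemma XofB x y j : Xof (x - y) j = Xof x j - Xof y j.
Proof. by apply/matrixP => k z; rewrite !mxE. Qed.
Lemma XofZ a x j : Xof (a *: x) j = a *: Xof x j.
Proof. by apply/matrixP => k z; rewrite !mxE. Qed.
Lemma Xof0 j : Xof 0 j = 0.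
Proof. by apply/matrixP => k z; rewrite !mxE. Qed.

Definition Mx (C : 'I_d -> 'I_d -> bool) (Bs : 'I_d -> 'M[F]_n) : 'M[F]_(d * n) :=
  \matrix_(a, b) (if C (blk a) (blk b) then Bs (blk b) (pos a) (pos b) else 0).

Lemma Mx_mul C Bs x i :
  Xof (Mx C Bs *m x) i = \sum_(j | C i j) Bs j *m Xof x j.
Proof.
apply/matrixP => k z; rewrite mxE [in LHS]mxE summxE sum_blocks [in RHS]big_mkcond /=.
apply: eq_bigr => j _.
case hC: (C i j) => /=.
  rewrite mxE; apply: eq_bigr => l _; by rewrite !mxE !blk_idx !pos_idx hC.
by rewrite big1 // => l _; rewrite mxE !blk_idx !pos_idx hC mul0r.
Qed.

Lemma Lmx_Mx Bs : Lmx Bs = Mx (fun i j => (j < i)%N) Bs.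
Proof. by []. Qed.
Lemma Umx_Mx Bs : Umx Bs = Mx (fun i j => (i <= j)%N) Bs.
Proof. by []. Qed.

End Blocks.


Lemma foldr_rev_l (T S : Type) (h : T -> S -> S) z s :
  foldr h z (rev s) = foldl (fun z x => h x z) z s.
Proof.
elim: s z => //= x s IH z; by rewrite rev_cons -cats1 foldr_cat /= IH.
Qed.

Section Sweep.
Variables (F : fieldType) (d n : nat) (Q : 'I_d -> 'M[F]_n) (B : 'M[F]_n).
Hypothesis hQ : forall p q, Q p *m Q q = if p == q then Q p else 0.
Hypothesis hsum : \sum_p Q p = 1%:M.

Definition Fn (k : nat) : 'M[F]_n :=
  oapp (fun p : 'I_d => Q p *m B + 1%:M - Q p) 1%:M (insub k).

Fixpoint Sw (k : nat) : 'M[F]_n :=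
  match k with 0 => 1%:M | k'.+1 => Fn k' *m Sw k' end.

Lemma Sw_foldl k : Sw k = foldl (fun acc j => Fn j *m acc) 1%:M (iota 0 k).
Proof.
elim: k => // k IH.
have -> : iota 0 k.+1 = iota 0 k ++ [:: k] by rewrite -addn1 iotaD.
by rewrite foldl_cat /= -IH.
Qed.

Lemma fold_aux (A : 'M[F]_n) (s : seq 'I_d) :
  foldl (fun z x => (Q x *m B + 1%:M - Q x) *m z) A s =
  foldl (fun acc j => Fn j *m acc) A (map val s).
Proof. elim: s A => //= p s IH A; by rewrite IH /Fn valK. Qed.

Lemma rprod_Sw : rprod_mx (fun p => Q p *m B + 1%:M - Q p) = Sw d.
Proof. by rewrite /rprod_mx foldr_rev_l Sw_foldl -val_enum_ord fold_aux. Qed.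

Lemma Qsum1 m (Z : 'I_d -> 'cV[F]_n) :
  Q m *m \sum_j (Q j *m Z j) = Q m *m Z m.
Proof.
rewrite mulmx_sumr (bigD1 m) //= mulmxA hQ eqxx big1 ?addr0 // => j hj.
by rewrite mulmxA hQ eq_sym (negbTE hj) mul0mx.
Qed.

Lemma Qsum_cond m (P : pred 'I_d) (Z : 'I_d -> 'cV[F]_n) :
  Q m *m \sum_(j | P j) (Q j *m Z j) = if P m then Q m *m Z m else 0.
Proof.
have -> : \sum_(j | P j) (Q j *m Z j) = \sum_j (Q j *m (if P j then Z j else 0)).
  rewrite big_mkcond; apply: eq_bigr => j _; by case: (P j); rewrite ?mulmx0.
by rewrite Qsum1; case: (P m); rewrite ?mulmx0.
Qed.

Lemma sumQ (v : 'cV[F]_n) : \sum_j (Q j *m v) = v.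
Proof. by rewrite -(mulmx_suml v) hsum mul1mx. Qed.

Lemma sweep (v : 'cV[F]_n) k : (k <= d)%N ->
  Sw k *m v = \sum_m (Q m *m (if (m < k)%N then B *m (Sw m *m v) else v)).
Proof.
elim: k => [_ | k IH hk] /=.
  by rewrite mul1mx sumQ.
have hk' : (k < d)%N by [].
have hF : Fn k = Q (Ordinal hk') *m B + 1%:M - Q (Ordinal hk').
  have E : insub k = Some (Ordinal hk') := valK (Ordinal hk').
  by rewrite /Fn E.
set p := Ordinal hk'.
have hp : Q p *m (Sw k *m v) = Q p *m v.
  by rewrite (IH (ltnW hk)) Qsum1 ltnn.
rewrite hF -mulmxA mulmxBl mulmxDl mul1mx hp.
have -> : \sum_m (Q m *m (if (m < k.+1)%N then B *m (Sw m *m v) else v)) =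
   \sum_m (Q m *m (if (m < k)%N then B *m (Sw m *m v) else v) +
   (if m == p then Q p *m B *m (Sw k *m v) - Q p *m v else 0)).
  apply: eq_bigr => m _.
  case: (eqVneq m p) => [-> | hmp].
    have -> : Sw p = Sw k by [].
    by rewrite ltnSn ltnn mulmxA addrC subrK.
  rewrite addr0 ltnS leq_eqVlt.
  have -> : (val m == k) = false.
    apply/negbTE; apply: contra hmp => /eqP hm; apply/eqP; exact: val_inj.
  by [].
rewrite big_split.
rewrite -big_mkcond big_pred1_eq -(IH (ltnW hk)).
change (Q p *m B *m (Sw k *m v) + Sw k *m v - Q p *m v = Sw k *m v + (Q p *m B *m (Sw k *m v) - Q p *m v)).
by rewrite addrA (addrC (Q p *m B *m _)).
Qed.

End Sweep.


Lemma eigcolP (F : fieldType) n (g : 'M[F]_n) a :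
  reflect (exists2 x : 'cV_n, g *m x = a *: x & x != 0) (eigenvalue g a).
Proof.
have E : eigenvalue g a = eigenvalue g^T a.
  rewrite /eigenvalue /eigenspace !kermx_eq0 !row_free_unit -unitmx_tr.
  by rewrite linearB /= tr_scalar_mx.
rewrite E; apply: (iffP eigenvalueP) => [[v hv nz] | [x hx nz]].
  exists v^T.
    by apply: trmx_inj; rewrite trmx_mul trmxK hv linearZ /= trmxK.
  by apply: contra nz => /eqP h; rewrite -(trmxK v) h trmx0.
exists x^T.
  by rewrite -trmx_mul hx linearZ.
by apply: contra nz => /eqP h; rewrite -(trmxK x) h trmx0.
Qed.

Section Main.
Variables (F : fieldType) (d n : nat) (Q : 'I_d -> 'M[F]_n) (B : 'M[F]_n).
Hypothesis hQ : forall p q, Q p *m Q q = if p == q then Q p else 0.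
Hypothesis hsum : \sum_p Q p = 1%:M.

Lemma LU_unit : (1%:M - Lmx (fun p => Q p *m B)) \in unitmx.
Proof.
rewrite -unitmx_tr -row_free_unit; apply: inj_row_free => u hu.
have hx : (1%:M - Lmx (fun p => Q p *m B)) *m u^T = 0.
  by apply: trmx_inj; rewrite trmx_mul trmxK hu trmx0.
apply: trmx_inj; rewrite trmx0; apply: cV_blockP => j; rewrite Xof0.
move: hx; set x := u^T => hx.
have hb : forall i, Xof x i = \sum_(j : 'I_d | (j < i)%N) (Q j *m B) *m Xof x j.
  move=> i; have := congr1 (fun y => Xof y i) hx.
  rewrite /= mulmxBl mul1mx XofB Lmx_Mx Mx_mul Xof0 => /eqP.
  by rewrite subr_eq0 => /eqP.
suff H : forall k (i : 'I_d), (i < k)%N -> Xof x i = 0.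
  by apply: H (ltn_ord j).
elim=> // k IH i hi; rewrite hb big1 // => l hl; rewrite (IH l) ?mulmx0 //.
exact: leq_trans hl hi.
Qed.


Lemma iter_blocks (lam : F) (x : 'cV[F]_(d * n)) :
  (iter_mx (fun p => Q p *m B) *m x = lam *: x) <->
  (forall i : 'I_d, \sum_(j : 'I_d | (i <= j)%N) Q j *m (B *m Xof x j) =
     lam *: (Xof x i - \sum_(j : 'I_d | (j < i)%N) Q j *m (B *m Xof x j))).
Proof.
have hU := LU_unit.
set M := 1%:M - Lmx (fun p => Q p *m B) in hU *.
have step : (iter_mx (fun p => Q p *m B) *m x = lam *: x) <->
    (Umx (fun p => Q p *m B) *m x = lam *: (M *m x)).
  rewrite /iter_mx -/M; split => h.
    by rewrite scalemxAr -h -mulmxA mulKVmx.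
  by rewrite -mulmxA h -scalemxAr mulKmx.
rewrite step; split => h.
  move=> i; have := congr1 (fun y => Xof y i) h.
  rewrite /= XofZ /M mulmxBl mul1mx XofB Umx_Mx Lmx_Mx !Mx_mul /=.
  by under eq_bigr do rewrite -mulmxA; under [in X in _ = _ *: (_ - X)]eq_bigr do rewrite -mulmxA.
apply: cV_blockP => i.
rewrite XofZ /M mulmxBl mul1mx XofB Umx_Mx Lmx_Mx !Mx_mul /=.
under eq_bigr do rewrite -mulmxA; under [in X in _ = _ *: (_ - X)]eq_bigr do rewrite -mulmxA.
exact: h.
Qed.

Lemma sum_split_lt (i : 'I_d) (G1 G2 : 'I_d -> 'cV[F]_n) :
  \sum_(m : 'I_d) (if (m < i)%N then G1 m else G2 m) =
  \sum_(m : 'I_d | (m < i)%N) G1 m + \sum_(m : 'I_d | (i <= m)%N) G2 m.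
Proof.
rewrite (bigID (fun m : 'I_d => (m < i)%N)) /=; congr (_ + _).
  by apply: eq_bigr => m ->.
rewrite (eq_bigl (fun m : 'I_d => (i <= m)%N)) => [|m]; last by rewrite -leqNgt.
by apply: eq_bigr => m; rewrite ltnNge => ->.
Qed.

Theorem gen_main (lam : F) : (0 < d)%N -> lam != 0 ->
  eigenvalue (rprod_mx (fun p => Q p *m B + 1%:M - Q p)) lam =
  eigenvalue (iter_mx (fun p => Q p *m B)) lam.
Proof.
move=> hd hlam; pose i0 : 'I_d := Ordinal hd.
rewrite rprod_Sw; apply/eigcolP/eigcolP => -[v hv nzv].
- have key1 : forall j : 'I_d, Q j *m (B *m (Sw Q B j *m v)) = lam *: (Q j *m v).
    move=> j; have := congr1 (mulmx (Q j)) hv.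
    by rewrite (sweep B hQ hsum v (leqnn d)) Qsum1 // ltn_ord -scalemxAr.
  have key2 : forall i : 'I_d, Sw Q B i *m v =
      \sum_(m : 'I_d) (if (m < i)%N then lam *: (Q m *m v) else Q m *m v).
    move=> i; rewrite (sweep B hQ hsum v (ltnW (ltn_ord i))).
    by apply: eq_bigr => m _; case: ifP => // _; rewrite key1.
  pose x : 'cV[F]_(d * n) := \col_a (Sw Q B (blk a) *m v) (pos a) 0.
  have XofE : forall i, Xof x i = Sw Q B i *m v.
    move=> i; apply/matrixP => k z; by rewrite !mxE blk_idx pos_idx (ord1 z).
  exists x.
    apply/iter_blocks => i.
    under eq_bigr do rewrite XofE key1.
    under [in RHS]eq_bigr do rewrite XofE key1.
    rewrite XofE key2 sum_split_lt [X in X - _]addrC addrK.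
    by rewrite scaler_sumr.
  apply: contra nzv => /eqP x0; apply/eqP.
  by have := XofE i0; rewrite x0 Xof0 mul1mx => <-.
- move/iter_blocks: hv => hE.
  pose X := Xof v.
  have hm : forall (i m : 'I_d),
      (if (i <= m)%N then Q m *m (B *m X m) else 0) =
      lam *: (Q m *m X i - (if (m < i)%N then Q m *m (B *m X m) else 0)).
    move=> i m; have := congr1 (mulmx (Q m)) (hE i).
    by rewrite Qsum_cond // -scalemxAr mulmxBr Qsum_cond.
  pose w := X i0.
  have k1 : forall m, Q m *m (B *m X m) = lam *: (Q m *m w).
    move=> m; have := hm i0 m.
    rewrite (_ : (i0 <= m)%N = true) ?leq0n // (_ : (m < i0)%N = false) ?ltn0 //.
    by rewrite subr0.
  have k2 : forall i m, Q m *m X i = if (m < i)%N then lam *: (Q m *m w) else Q m *m w.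
    move=> i m; have := hm i m; case: leqP => him.
      rewrite subr0 k1 => /(scalerI hlam) ->; by [].
    move/esym/eqP; rewrite scaler_eq0 (negbTE hlam) /= subr_eq0 => /eqP ->.
    by rewrite k1.
  have k3 : forall i, X i = \sum_(m : 'I_d) (if (m < i)%N then lam *: (Q m *m w) else Q m *m w).
    by move=> i; rewrite -{1}(sumQ hsum (X i)); apply: eq_bigr => m _; rewrite k2.
  have k4 : forall i : 'I_d, Sw Q B i *m w = X i.
    suff H : forall k (i : 'I_d), (i < k)%N -> Sw Q B i *m w = X i.
      by move=> i; apply: H (ltn_ord i).
    elim=> // k IH i hi.
    rewrite (sweep B hQ hsum w (ltnW (ltn_ord i))) k3.
    apply: eq_bigr => m _; case: ifP => // hmi.
    rewrite (IH m) ?k1 //; exact: leq_trans hmi hi.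
  exists w.
    rewrite (sweep B hQ hsum w (leqnn d)).
    under eq_bigr do rewrite ltn_ord k4 k1.
    by rewrite -scaler_sumr sumQ.
  apply: contra nzv => /eqP w0; apply/eqP; apply: cV_blockP => i.
  rewrite Xof0 -/X k3 big1 // => m _; rewrite w0 mulmx0 scaler0; by case: ifP.
Qed.

End Main.


Section Map.
Variables (F K : fieldType) (f : {rmorphism F -> K}) (d n : nat).

Lemma map_rprod (G : 'I_d -> 'M[F]_n) (H : 'I_d -> 'M[K]_n) :
  (forall p, map_mx f (G p) = H p) -> map_mx f (rprod_mx G) = rprod_mx H.
Proof.
move=> hGH; rewrite /rprod_mx; elim: (rev _) => [|p s IH] /=.
  exact: map_mx1.
by rewrite map_mxM IH hGH.
Qed.

Lemma map_Lmx (Bs : 'I_d -> 'M[F]_n) :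
  map_mx f (Lmx Bs) = Lmx (fun p => map_mx f (Bs p)).
Proof.
apply/matrixP => a b; rewrite !mxE; case: ifP => _; by rewrite ?rmorph0 ?mxE.
Qed.
Lemma map_Umx (Bs : 'I_d -> 'M[F]_n) :
  map_mx f (Umx Bs) = Umx (fun p => map_mx f (Bs p)).
Proof.
apply/matrixP => a b; rewrite !mxE; case: ifP => _; by rewrite ?rmorph0 ?mxE.
Qed.

Lemma map_iter (Bs : 'I_d -> 'M[F]_n) :
  map_mx f (iter_mx Bs) = iter_mx (fun p => map_mx f (Bs p)).
Proof.
by rewrite /iter_mx map_mxM map_invmx map_mxB map_mx1 map_Lmx map_Umx.
Qed.
End Map.

Lemma proj_prop (R : numDomainType) d n (P : 'I_d -> 'M[R]_n) :
  (forall p i j, P p i j = 0 \/ P p i j = 1) ->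
  \sum_p P p = 1%:M ->
  forall p q, P p *m P q = if p == q then P p else 0.
Proof.
move=> h01 hsum.
have ge0 : forall p i j, 0 <= P p i j by move=> p i j; case: (h01 p i j) => ->.
have hs : forall i j, \sum_p P p i j = (i == j)%:R.
  by move=> i j; rewrite -summxE hsum mxE.
have hdiag : forall p i j, i != j -> P p i j = 0.
  move=> p i j hij; have E : \sum_q P q i j = 0 by rewrite hs (negbTE hij).
  by apply: (psumr_eq0P _ E) => // q _; exact: ge0.
have hdisj : forall p q i, p != q -> P p i i * P q i i = 0.
  move=> p q i hpq; have := hs i i; rewrite eqxx (bigD1 p) //= (bigD1 q) /=; last first.
    by rewrite eq_sym.
  set S := \sum_(r | _) _.
  have S0 : 0 <= S by apply: sumr_ge0 => r _; exact: ge0.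
  case: (h01 p i i) => ->; first by rewrite mul0r.
  case: (h01 q i i) => ->; first by rewrite mulr0.
  move=> E; have : 1 + S = 0 by apply: (addrI 1); rewrite addr0.
  move/eqP; rewrite gt_eqF //; exact: ltr_pwDl.
move=> p q; apply/matrixP => i j; rewrite !mxE (bigD1 i) //= big1 ?addr0; last first.
  by move=> k hk; rewrite hdiag ?mul0r // eq_sym.
case: (eqVneq i j) => [<- | hij]; last first.
  by rewrite (hdiag q i j hij) mulr0; case: eqP => _; rewrite ?mxE ?hdiag.
case: (eqVneq p q) => [<- | hpq]; last by rewrite mxE hdisj.
by case: (h01 p i i) => ->; rewrite ?mul0r ?mul1r.
Qed.

Unset Implicit Arguments.
Lemma map_iter' (F K : fieldType) (f : {rmorphism F -> K}) d n
   (G : 'I_d -> 'M[F]_n) (H : 'I_d -> 'M[K]_n) :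
  (forall p, map_mx f (G p) = H p) -> map_mx f (iter_mx G) = iter_mx H.
Proof.
move=> hGH; rewrite map_iter.
have eL : Lmx (fun p => map_mx f (G p)) = Lmx H.
  by apply/matrixP => a b; rewrite [LHS]mxE [RHS]mxE -hGH.
have eU : Umx (fun p => map_mx f (G p)) = Umx H.
  by apply/matrixP => a b; rewrite [LHS]mxE [RHS]mxE -hGH.
by rewrite /iter_mx eL eU.
Qed.

Theorem proposition5p1 (R : rcfType) (n d : nat) (BJ : 'M[R]_n)
    (P : 'I_d -> 'M[R]_n) :
  (1 <= d)%N -> (d <= n)%N ->
  (forall p i j, P p i j = 0 \/ P p i j = 1) ->
  (forall p, P p != 0) ->
  \sum_p P p = 1%:M ->
  (forall p, P p *m BJ != 0) ->
  forall lambda : R[i], lambda != 0 ->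
    eigenvalue (map_mx (real_complex R)
                  (rprod_mx (fun p => P p *m BJ + 1%:M - P p))) lambda
    = eigenvalue (map_mx (real_complex R)
                  (iter_mx (fun p => P p *m BJ))) lambda.
Proof.
move=> hd _ h01 _ hsum _ lam hlam.
have hQ := proj_prop h01 hsum.
rewrite (@map_rprod _ _ (real_complex R) d n _ (fun p => map_mx (real_complex R) (P p) *m map_mx (real_complex R) BJ + 1%:M - map_mx (real_complex R) (P p))); last first.
  by move=> p; rewrite map_mxB map_mxD map_mxM map_mx1.
rewrite (@map_iter' _ _ (real_complex R) d n _ (fun p => map_mx (real_complex R) (P p) *m map_mx (real_complex R) BJ)); last first.
  by move=> p; rewrite map_mxM.
apply: gen_main => //.
- move=> p q; rewrite -map_mxM hQ; case: eqP => _ //; exact: map_mx0.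
- rewrite -(map_mx1 (real_complex R)) -hsum; apply/matrixP => a b.
  rewrite summxE !mxE summxE rmorph_sum; apply: eq_bigr => p _; by rewrite mxE.
Qed.
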